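(* In the setting below, let $a\in\mathcal{B}(x)\setminus\mathcal{B}(y)$, $b\in\mathcal{B}(y)$, with $x\neq y$ and $[x,y]=(x_0,\dots,x_m)$. (i) If $\gamma\in\mathcal{P}h(a,b;\mathcal{B}(y)^\complement)$ and $\gamma=\gamma_1\ast\cdots\ast\gamma_l\ast\gamma_f$ is its decomposition along $[x,y]$ with crossing vertices $(c_0,\dots,c_l)$, then $c_l=b$ and $\gamma_f=(b)$. (ii) For every $(c_0,\dots,c_l)\in\Xi_{[x,y]}$ with crossing indices $(i_1,\dots,i_l)$, the map $(\gamma_1,\dots,\gamma_l)\mapsto\gamma_1\ast\cdots\ast\gamma_l$ is a bijection from $\prod_{s=1}^l\mathcal{P}h(c_{s-1},c_s;\mathcal{B}(x_{i_s})^\complement)$ onto the set of $p$-admissible paths in $\mathcal{P}h(c_0,c_l;\mathcal{B}(x_m)^\complement)$ whose crossing vertices along $[x,y]$ are $(c_0,\dots,c_l)$.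
   Context: Setting: $X$ a tree of bounded valence, $p$ a transition kernel on $X_0$ with $(X_0,p)$ irreducible, $k\ge0$ with $d(u,v)>k\Rightarrow p(u,v)=0$. A $p$-admissible path is $(\omega_0,\dots,\omega_n)$ with $p(\omega_{i-1},\omega_i)>0$; $\mathcal{P}h(a,b;\Omega)$ is the set of those from $a$ to $b$ with intermediate vertices in $\Omega$; $\ast$ is concatenation. $\mathcal{B}(w)=\{v:d(w,v)\le k\}$, $\partial\mathcal{B}(w)=\{v:d(w,v)=k+1\}$, $\Xi_w=\{(a,b)\in\partial\mathcal{B}(w)\times\mathcal{B}(w):\mathcal{P}h(a,b;\mathcal{B}(w)^\complement)\ne\emptyset\}$. $\Xi_{[x,y]}$: tuples $(c_0,\dots,c_l)$, $0<l\le m$, with integers $0<i_1<\dots<i_l\le m$ (crossing indices, $i_s=1+\max\{i:c_{s-1}\in\mathcal{B}(x_i)\}$) such that $c_0\in\mathcal{B}(x)\cap\partial\mathcal{B}(x_{i_1})$, $c_j\in\mathcal{B}(x_{i_j})\cap\partial\mathcal{B}(x_{i_{j+1}})$, $c_l\in\mathcal{B}(x_{i_l})\cap\mathcal{B}(y)$, $(c_{j-1},c_j)\in\Xi_{x_{i_j}}$. The decomposition of a $p$-admissible path $\gamma$ from $a'\in\mathcal{B}(x)\setminus\mathcal{B}(y)$ to $b'\in\mathcal{B}(y)$ along $[x,y]$ is the unique writing $\gamma=\gamma_1\ast\cdots\ast\gamma_l\ast\gamma_f$ with $(c_0,\dots,c_l)\in\Xi_{[x,y]}$ (the crossing vertices),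 $\gamma_s\in\mathcal{P}h(c_{s-1},c_s;\mathcal{B}(x_{i_s})^\complement)$ and $\gamma_f$ a $p$-admissible path from $c_l$ to $b'$; concretely $c_s$ is the first vertex of $\gamma$ lying in $\mathcal{B}(x_{i_s})$. *)

(* Defs.v *)
From Stdlib Require Import Reals List Arith Lia.
Import ListNotations.
Set Implicit Arguments.

Inductive walk (V : Type) (adj : V -> V -> Prop) : V -> V -> nat -> Prop :=
| walk0 u : walk adj u u 0
| walkS u w v n : adj u w -> walk adj w v n -> walk adj u v (S n).

Fixpoint chain (V : Type) (r : V -> V -> Prop) (l : list V) : Prop :=
  match l with
  | a :: ((b :: _) as t) => r a b /\ chain r t
  | _ => True
  end.

Definition closed_walk (V : Type) (adj : V -> V -> Prop) (c : list V) : Prop :=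
  match c with
  | [] => False
  | v0 :: _ => chain adj c /\ adj (last c v0) v0
  end.

Definition is_tree (V : Type) (adj : V -> V -> Prop) : Prop :=
  (forall u v, adj u v -> adj v u) /\
  (forall u, ~ adj u u) /\
  (forall u v, exists n, walk adj u v n) /\
  (forall c : list V, NoDup c -> (3 <= length c)%nat -> ~ closed_walk adj c).

Definition bounded_valence (V : Type) (adj : V -> V -> Prop) : Prop :=
  exists M : nat, forall v, exists L : list V,
    (length L <= M)%nat /\ forall w, adj v w -> In w L.

Definition is_graph_dist (V : Type) (adj : V -> V -> Prop) (d : V -> V -> nat) : Prop :=
  forall u v, walk adj u v (d u v) /\ forall n, walk adj u v n -> (d u v <= n)%nat.

(* [x,y] = xs = (x_0,...,x_m), m = d(x,y) *)
Definition geodesic (V : Type) (adj : V -> V -> Prop) (d : V -> V -> nat)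
  (x y : V) (xs : list V) : Prop :=
  length xs = S (d x y) /\ nth 0 xs x = x /\ last xs x = y /\ chain adj xs.

Definition sumR (l : list R) : R := fold_right Rplus 0%R l.

Definition transition_kernel (V : Type) (p : V -> V -> R) : Prop :=
  (forall u v, (0 <= p u v)%R) /\
  forall u, exists L : list V, NoDup L /\ (forall v, p u v <> 0%R -> In v L) /\
    sumR (map (p u) L) = 1%R.

Definition finite_range (V : Type) (d : V -> V -> nat) (p : V -> V -> R) (k : nat) : Prop :=
  forall u v, (k < d u v)%nat -> p u v = 0%R.

Definition padm (V : Type) (p : V -> V -> R) (g : list V) : Prop :=
  g <> [] /\ chain (fun u v => (0 < p u v)%R) g.

Definition Ph (V : Type) (p : V -> V -> R) (a b : V) (Om : V -> Prop) (g : list V) : Prop :=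
  chain (fun u v => (0 < p u v)%R) g /\
  ((g = [a] /\ a = b) \/ exists mid, g = a :: mid ++ [b] /\ Forall Om mid).

Definition irreducible (V : Type) (p : V -> V -> R) : Prop :=
  forall u v, exists g, Ph p u v (fun _ => True) g.

(* concatenation g1 * g2 * ... (paths glued at matching endpoints) *)
Fixpoint cat_paths (V : Type) (gs : list (list V)) : list V :=
  match gs with
  | [] => []
  | [g] => g
  | g :: gs' => g ++ tl (cat_paths gs')
  end.

Definition ball (V : Type) (d : V -> V -> nat) (k : nat) (w v : V) : Prop := (d w v <= k)%nat.
Definition sphere (V : Type) (d : V -> V -> nat) (k : nat) (w v : V) : Prop := d w v = S k.

Definition XiW (V : Type) (p : V -> V -> R) (d : V -> V -> nat) (k : nat) (w a b : V) : Prop :=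
  sphere d k w a /\ ball d k w b /\
  exists g, Ph p a b (fun v => ~ ball d k w v) g.

Definition cross_index (V : Type) (d : V -> V -> nat) (k : nat) (xs : list V) (c : V) (i : nat) : Prop :=
  exists j, i = S j /\ (j < length xs)%nat /\ ball d k (nth j xs c) c /\
    forall j', (j' < length xs)%nat -> ball d k (nth j' xs c) c -> (j' <= j)%nat.

(* (c_0,...,c_l) in Xi_[x,y] with crossing indices (i_1,...,i_l);
   cs = [c_0;...;c_l], is = [i_1;...;i_l], xs = [x_0;...;x_m], x = x_0. *)
Definition Xi_path (V : Type) (p : V -> V -> R) (d : V -> V -> nat) (k : nat)
  (x : V) (xs : list V) (cs : list V) (is : list nat) : Prop :=
  let m := pred (length xs) in
  let l := length is in
  let c := fun s => nth s cs x in
  let i := fun s => nth s is 0%nat in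
  let xv := fun j => nth j xs x in
  (0 < l)%nat /\ (l <= m)%nat /\ length cs = S l /\
  (0 < i 0)%nat /\ (i (pred l) <= m)%nat /\
  (forall s, (S s < l)%nat -> (i s < i (S s))%nat) /\
  ball d k x (c 0%nat) /\ ball d k (last xs x) (c l) /\
  forall s, (s < l)%nat ->
    cross_index d k xs (c s) (i s) /\
    sphere d k (xv (i s)) (c s) /\
    ball d k (xv (i s)) (c (S s)) /\
    XiW p d k (xv (i s)) (c s) (c (S s)).

Definition prod_Ph (V : Type) (p : V -> V -> R) (d : V -> V -> nat) (k : nat)
  (x : V) (xs : list V) (cs : list V) (is : list nat) (gs : list (list V)) : Prop :=
  length gs = length is /\
  forall s, (s < length is)%nat ->
    Ph p (nth s cs x) (nth (S s) cs x)
       (fun v => ~ ball d k (nth (nth s is 0%nat) xs x) v) (nth s gs []).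

Definition decomp (V : Type) (p : V -> V -> R) (d : V -> V -> nat) (k : nat)
  (x : V) (xs : list V) (g : list V) (cs : list V) (is : list nat)
  (gs : list (list V)) (gf : list V) : Prop :=
  Xi_path p d k x xs cs is /\
  prod_Ph p d k x xs cs is gs /\
  padm p gf /\ hd_error gf = Some (nth (length is) cs x) /\
  g = cat_paths (gs ++ [gf]).

Definition bij_onto (A B : Type) (f : A -> B) (SA : A -> Prop) (SB : B -> Prop) : Prop :=
  (forall a, SA a -> SB (f a)) /\
  (forall a a', SA a -> SA a' -> f a = f a' -> a = a') /\
  (forall b, SB b -> exists a, SA a /\ f a = b).

(* Main.v *)
Require Import Defs.
From Stdlib Require Import Reals List Arith Lia Classical.
Import ListNotations.
Set Implicit Arguments. Unset Strict Implicit.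


Inductive lp (V : Type) (adj : V -> V -> Prop) (P : V -> Prop) : list V -> V -> V -> Prop :=
| lp1 a : P a -> lp adj P [a] a a
| lpS a l b c : adj a b -> P a -> lp adj P l b c -> lp adj P (a :: l) a c.

Lemma lp_walk V adj P (l : list V) a b : lp adj P l a b -> walk adj a b (pred (length l)).
Proof.
  induction 1; simpl. constructor.
  inversion H1; subst; simpl in *; econstructor; eauto.
Qed.

Lemma walk_lp V (adj : V -> V -> Prop) a b n : walk adj a b n ->
  exists l, lp adj (fun _ => True) l a b /\ length l = S n.
Proof.
  induction 1. exists [u]; split; auto; constructor; auto.
  destruct IHwalk as [l [H1 H2]]. exists (u :: l); split; simpl; auto.
  econstructor; eauto.
Qed.

Lemma lp_Forall V adj P (l : list V) a b : lp adj P l a b -> Forall P l.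
Proof. induction 1; auto. Qed.

Lemma lp_hd V adj P (l : list V) a b : lp adj P l a b -> exists t, l = a :: t.
Proof. destruct 1; eauto. Qed.

Lemma lp_weaken V adj (P Q : V -> Prop) l a b : (forall v, P v -> Q v) ->
  lp adj P l a b -> lp adj Q l a b.
Proof. intros HPQ; induction 1; econstructor; eauto. Qed.

Lemma lp_app V adj P (l1 l2 : list V) a b c : lp adj P l1 a b -> lp adj P l2 b c ->
  lp adj P (l1 ++ tl l2) a c.
Proof.
  induction 1; intros H2.
  - destruct (lp_hd H2) as [t ->]; simpl; auto.
  - simpl. econstructor; eauto.
Qed.



Lemma lp_last_P V adj P (l : list V) a b : lp adj P l a b -> P b.
Proof. induction 1; auto. Qed.

Lemma lp_rev V (adj : V -> V -> Prop) P (Hs : forall u v, adj u v -> adj v u) l a b :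
  lp adj P l a b -> lp adj P (rev l) b a.
Proof.
  induction 1. simpl; constructor; auto.
  simpl. replace (rev l ++ [a]) with (rev l ++ tl [b; a]) by reflexivity.
  eapply lp_app; eauto. apply lp_hd in H1 as Hh. destruct Hh as [t ->].
  apply lp_Forall in H1. inversion H1; subst.
  econstructor; eauto. constructor; auto.
Qed.

Lemma lp_suffix V adj P (l1 l3 : list V) w a b : lp adj P (l1 ++ w :: l3) a b ->
  lp adj P (w :: l3) w b.
Proof.
  revert a. induction l1; simpl; intros a0 H.
  - pose proof (lp_hd H) as [t Ht]; injection Ht; intros; subst; exact H.
  - inversion H; subst; [destruct l1; discriminate| eauto].
Qed.

Lemma lp_prefix V adj P (l1 l3 : list V) w a b : lp adj P (l1 ++ w :: l3) a b ->
  lp adj P (l1 ++ [w]) a w.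
Proof.
  revert a. induction l1; simpl; intros a0 H.
  - inversion H; subst; constructor; auto.
  - inversion H as [|? ? b0 ? Hab HP Hr]; subst; [destruct l1; discriminate|].
    econstructor; eauto.
Qed.

Lemma lp_nodup V adj P (l : list V) a b : lp adj P l a b ->
  exists l', lp adj P l' a b /\ NoDup l'.
Proof.
  induction 1. exists [a]; split; [constructor; auto| repeat constructor; auto].
  destruct IHlp as [l' [H2 H3]].
  destruct (classic (In a l')) as [Hin|Hn].
  - apply in_split in Hin. destruct Hin as [l1 [l3 ->]].
    exists (a :: l3); split. eapply lp_suffix; eauto.
    apply NoDup_remove_2 in H3 as H4. apply NoDup_remove_1 in H3.
    apply NoDup_app_remove_l in H3. constructor; auto. intro; apply H4; apply in_or_app; auto.
  - exists (a :: l'); split. econstructor; eauto. constructor; auto.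
Qed.

Lemma lp_restrict V adj P Q (l : list V) a b : lp adj P l a b -> Forall Q l -> lp adj Q l a b.
Proof. induction 1; intros HF; inversion HF; subst; econstructor; eauto. Qed.

Lemma lp_chain V adj P (l : list V) a b : lp adj P l a b -> chain adj l.
Proof. induction 1; simpl; auto. destruct (lp_hd H1) as [t ->]. auto. Qed.

Lemma lp_last V adj P (l : list V) a b : lp adj P l a b -> forall z, last l z = b.
Proof. induction 1; intros z; simpl; auto. destruct (lp_hd H1) as [t ->]. rewrite <- (IHlp z). reflexivity. Qed.

Lemma lp_len_app V (l1 l2 : list V) : l2 <> [] -> length (l1 ++ tl l2) = length l1 + length l2 - 1.
Proof. destruct l2; [congruence|]. intros _. simpl. rewrite length_app. lia. Qed.


Lemma d_le V adj d (Hd : is_graph_dist adj d) P (l : list V) u v :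
  lp adj P l u v -> d u v <= pred (length l).
Proof. intros H. apply (proj2 (Hd u v)). eapply lp_walk; eauto. Qed.

Lemma d_path V adj d (Hd : is_graph_dist adj d) (u v : V) :
  exists l, lp adj (fun _ => True) l u v /\ length l = S (d u v).
Proof. apply walk_lp. apply (proj1 (Hd u v)). Qed.

Lemma d_sym V adj d (Hs : forall u v : V, adj u v -> adj v u) (Hd : is_graph_dist adj d) u v :
  d u v = d v u.
Proof.
  assert (forall u v, d u v <= d v u).
  { intros a b. destruct (d_path Hd b a) as [l [H1 H2]].
    apply lp_rev in H1; auto. apply (d_le Hd) in H1. rewrite length_rev, H2 in H1. simpl in H1. lia. }
  pose proof (H u v); pose proof (H v u); lia.
Qed.

Lemma d_tri V adj d (Hd : is_graph_dist adj d) (u v z : V) : d u z <= d u v + d v z.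
Proof.
  destruct (d_path Hd u v) as [l1 [H1 H2]]. destruct (d_path Hd v z) as [l2 [H3 H4]].
  pose proof (lp_app H1 H3) as H. apply (d_le Hd) in H.
  rewrite lp_len_app in H. lia. destruct l2; simpl in *; congruence.
Qed.

Lemma d_adj V adj d (Hd : is_graph_dist adj d) (u v : V) : adj u v -> d u v <= 1.
Proof.
  intros H. apply (proj2 (Hd u v)). econstructor; eauto. constructor.
Qed.

Lemma d_zero V adj d (Hd : is_graph_dist adj d) (u v : V) : d u v = 0 -> u = v.
Proof. intros H. pose proof (proj1 (Hd u v)) as W. rewrite H in W. inversion W; auto. Qed.

Lemma d_refl V adj d (Hd : is_graph_dist adj d) (u : V) : d u u = 0.
Proof. pose proof (proj2 (Hd u u) 0 (walk0 adj u)). lia. Qed.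

Lemma d_NB V adj d (Hs : forall u v : V, adj u v -> adj v u) (Hd : is_graph_dist adj d) (a b : V) :
  1 <= d a b -> exists q, adj b q /\ S (d a q) = d a b.
Proof.
  intros H. destruct (d_path Hd b a) as [l [H1 H2]].
  inversion H1; subst. rewrite (d_refl Hd) in H; lia.
  rename H0 into Hab0. rename H4 into Hl.
  exists b0; split; auto.
  apply (d_le Hd) in Hl. simpl in H2. rewrite (d_sym Hs Hd b a) in *.
  rewrite (d_sym Hs Hd b0 a) in Hl.
  pose proof (d_tri Hd a b0 b).
  pose proof (@d_adj V adj d Hd b b0 Hab0) as Hq. rewrite (d_sym Hs Hd) in Hq. lia.
Qed.

Lemma d_AV V adj d (Hd : is_graph_dist adj d) (a v w : V) :
  d a v < d a w + d w v -> exists l, lp adj (fun t => t <> w) l a v.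
Proof.
  intros H. destruct (d_path Hd a v) as [l [H1 H2]]. exists l.
  apply (lp_restrict H1). apply Forall_forall. intros t Ht ->.
  apply in_split in Ht. destruct Ht as [l1 [l3 ->]].
  pose proof (d_le Hd (lp_prefix H1)). pose proof (d_le Hd (lp_suffix H1)).
  rewrite length_app in *. simpl in *. lia.
Qed.

Lemma tree_sep V adj d (Ht : is_tree adj) (Hd : is_graph_dist adj d) (u z w v : V) :
  d u z = d u w + d w z -> d u v = d u w + d w v \/ d v z = d v w + d w z.
Proof.
  intros Huz. destruct Ht as [Hs [Hirr [Hconn Hcyc]]].
  destruct (classic (d u v = d u w + d w v)) as [E1|E1]; auto.
  destruct (classic (d v z = d v w + d w z)) as [E2|E2]; auto.
  exfalso.
  pose proof (d_tri Hd u w v). pose proof (d_tri Hd v w z).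
  assert (Hwu : 1 <= d u w).
  { destruct (d u w) eqn:E; [|lia]. apply (d_zero Hd) in E. subst. lia. }
  assert (Hwz : 1 <= d w z).
  { destruct (d w z) eqn:E; [|lia]. apply (d_zero Hd) in E. subst; lia. }
  destruct (d_NB Hs Hd Hwu) as [q1 [A1 B1]].
  rewrite (d_sym Hs Hd) in Hwz.
  destruct (d_NB Hs Hd Hwz) as [q2 [A2 B2]].
  rewrite (d_sym Hs Hd z w) in B2.
  assert (q1 <> q2).
  { intros ->. pose proof (d_tri Hd u q2 z). rewrite (d_sym Hs Hd q2 z) in H1. lia. }
  destruct (@d_AV V adj d Hd q1 u w) as [L1 HL1].
  { rewrite (d_sym Hs Hd q1 u), (d_sym Hs Hd w u). lia. }
  destruct (@d_AV V adj d Hd u v w) as [L2 HL2]. lia.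
  destruct (@d_AV V adj d Hd v z w) as [L3 HL3]. lia.
  destruct (@d_AV V adj d Hd z q2 w) as [L4 HL4].
  { rewrite (d_sym Hs Hd z w). lia. }
  pose proof (lp_app (lp_app (lp_app HL1 HL2) HL3) HL4) as HL.
  destruct (lp_nodup HL) as [L [HLp HLn]].
  apply (Hcyc (w :: L)).
  - constructor; auto. intro Hin. apply lp_Forall in HLp.
    rewrite Forall_forall in HLp. apply (HLp w Hin); auto.
  - inversion HLp as [|? ? b0 ? _ _ H4]; subst. congruence. destruct (lp_hd H4) as [t ->]; simpl; lia.
  - inversion HLp as [|? ? b0 ? _ _ H4]; subst. congruence. simpl. split.
    + split; auto. apply lp_chain in HLp; auto.
    + pose proof (lp_last HLp w) as Hl. simpl in Hl. rewrite Hl. apply Hs; auto.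
Qed.

Lemma cat_cons V (g : list V) r : cat_paths (g :: r) = g ++ tl (cat_paths r).
Proof. destruct r; simpl; auto. rewrite app_nil_r; auto. Qed.

Lemma cat_ne V (gs : list (list V)) : Forall (fun g => g <> []) gs -> gs <> [] -> cat_paths gs <> [].
Proof. intros H Hn. destruct gs as [|g r]; [congruence|]. rewrite cat_cons. inversion H; subst.
  destruct g; simpl; congruence. Qed.

Lemma cat_snoc V (gs : list (list V)) gf : Forall (fun g => g <> []) gs -> gs <> [] ->
  cat_paths (gs ++ [gf]) = cat_paths gs ++ tl gf.
Proof.
  induction gs as [|g r IH]; intros H Hn; [congruence|]. inversion H; subst.
  simpl app. rewrite !cat_cons. destruct r as [|g' r'].
  - simpl. rewrite ?app_nil_r. auto.
  - rewrite IH; auto; [|congruence]. rewrite <- app_assoc. f_equal.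
    pose proof (@cat_ne V (g' :: r') H3 ltac:(congruence)) as Hne.
    destruct (cat_paths (g' :: r')); [congruence|]. reflexivity.
Qed.

Lemma chain_app V (r : V -> V -> Prop) l1 b l2 : chain r (l1 ++ [b]) -> chain r (b :: l2) ->
  chain r (l1 ++ b :: l2).
Proof.
  induction l1 as [|x l1 IH]; simpl; auto. intros H1 H2.
  destruct l1 as [|y l1]; simpl in *.
  - destruct H1; split; auto.
  - destruct H1 as [H1 H3]; split; [exact H1 | exact (IH H3 H2)].
Qed.

Lemma chain_app_inv V (r : V -> V -> Prop) l1 l2 : chain r (l1 ++ l2) -> chain r l2.
Proof.
  induction l1 as [|x l1 IH]; simpl; auto. intros H. apply IH.
  destruct (l1 ++ l2); auto. destruct H; auto.
Qed.

Lemma Ph_hd V p (a b : V) Om g : Ph p a b Om g -> exists t, g = a :: t.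
Proof. intros [_ [[-> _]|[mid [-> _]]]]; eauto. Qed.

Lemma Ph_nonempty V p (a b : V) Om g : Ph p a b Om g -> g <> [].
Proof. intros H; destruct (Ph_hd H) as [t ->]; congruence. Qed.

Lemma Ph_app V p (a b c : V) Om g1 g2 : Ph p a b Om g1 -> Ph p b c Om g2 -> Om b ->
  Ph p a c Om (g1 ++ tl g2).
Proof.
  intros [C1 [[-> ->]|[m1 [-> F1]]]] [C2 [[-> ->]|[m2 [-> F2]]]] Hb; simpl.
  - split; auto.
  - split; auto. right; eauto.
  - rewrite app_nil_r. split; auto. right; eauto.
  - split.
    + change (a :: m1 ++ [b]) with ((a :: m1) ++ [b]) in C1.
      pose proof (chain_app C1 C2) as Hc. assert (E: (a :: m1) ++ b :: m2 ++ [c] = (a :: m1 ++ [b]) ++ m2 ++ [c]) by (simpl; rewrite <- app_assoc; reflexivity). rewrite E in Hc. exact Hc.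
    + right. exists (m1 ++ b :: m2). split.
      * simpl. rewrite <- !app_assoc. reflexivity.
      * apply Forall_app; split; auto.
Qed.

Lemma cat_Ph V p Om (gs : list (list V)) : forall c : nat -> V, gs <> [] ->
  (forall s, s < length gs -> Ph p (c s) (c (S s)) Om (nth s gs [])) ->
  (forall s, 0 < s < length gs -> Om (c s)) ->
  Ph p (c 0) (c (length gs)) Om (cat_paths gs).
Proof.
  induction gs as [|g r IH]; intros c Hn H1 H2; [congruence|].
  rewrite cat_cons. destruct r as [|g' r'].
  - simpl. rewrite app_nil_r. apply (H1 0). simpl; lia.
  - apply Ph_app with (b := c 1).
    + apply (H1 0); simpl; lia.
    + apply (IH (fun s => c (S s))). congruence.
      * intros s Hs. apply (H1 (S s)). simpl in *; lia.
      * intros s Hs. apply (H2 (S s)). simpl in *; lia.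
    + apply H2; simpl; lia.
Qed.

Lemma ENDGF V p (a b : V) Om g q mid c gf : Ph p a b Om g ->
  g = (q :: mid ++ [c]) ++ tl gf -> ~ Om c -> hd_error gf = Some c -> gf = [c] /\ c = b.
Proof.
  intros [C [[-> ->]|[mid0 [-> F]]]] Hg Hc Hh.
  - destruct mid; simpl in Hg; discriminate.
  - destruct gf as [|c' t]; [discriminate|]. simpl in Hh. injection Hh as ->.
    simpl in Hg. injection Hg as Hq Hg.
    destruct t as [|x t].
    + rewrite app_nil_r in Hg. apply app_inj_tail in Hg. destruct Hg; subst; auto.
    + exfalso. apply Hc. rewrite Forall_forall in F. apply F.
      assert (mid0 = removelast (mid0 ++ [b])) by (rewrite removelast_last; auto).
      rewrite H, Hg. rewrite <- app_assoc. rewrite removelast_app by discriminate.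
      apply in_or_app. right. simpl. auto.
Qed.

Lemma mid_eq V (Om : V -> Prop) b mid mid' t t' : Forall Om mid -> Forall Om mid' -> ~ Om b ->
  mid ++ b :: t = mid' ++ b :: t' -> mid = mid' /\ t = t'.
Proof.
  revert mid'. induction mid as [|x mid IH]; intros mid' F F' Hb E.
  - destruct mid' as [|y mid']; simpl in E; injection E; intros; subst; auto.
    inversion F'; contradiction.
  - destruct mid' as [|y mid']; simpl in E; injection E; intros; subst.
    + inversion F; contradiction.
    + inversion F; inversion F'; subst. destruct (IH mid' H3 H7 Hb H) as [-> ->]; auto.
Qed.

Lemma PREF V p (a b : V) Om g1 g1' t t' : a <> b -> Ph p a b Om g1 -> Ph p a b Om g1' -> ~ Om b ->
  g1 ++ t = g1' ++ t' -> g1 = g1' /\ t = t'.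
Proof.
  intros Hab [_ [[_ E]|[m1 [-> F1]]]] [_ [[_ E']|[m2 [-> F2]]]] Hb Heq; try congruence.
  simpl in Heq. injection Heq as Heq. rewrite <- !app_assoc in Heq. simpl in Heq.
  destruct (mid_eq F1 F2 Hb Heq) as [-> ->]. auto.
Qed.

Lemma inj_aux V p (gs : list (list V)) : forall gs' (c : nat -> V) (Om : nat -> V -> Prop),
  length gs = length gs' ->
  (forall s, s < length gs -> Ph p (c s) (c (S s)) (Om s) (nth s gs []) /\
     Ph p (c s) (c (S s)) (Om s) (nth s gs' []) /\ c s <> c (S s) /\ ~ Om s (c (S s))) ->
  cat_paths gs = cat_paths gs' -> gs = gs'.
Proof.
  induction gs as [|g r IH]; intros gs' c Om Hl H E.
  - destruct gs'; simpl in Hl; congruence.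
  - destruct gs' as [|g' r']; simpl in Hl; [congruence|].
    rewrite !cat_cons in E.
    destruct (H 0 ltac:(simpl; lia)) as [P1 [P2 [N1 N2]]]. simpl in P1, P2.
    destruct (PREF N1 P1 P2 N2 E) as [-> Et]. f_equal.
    apply (IH r' (fun s => c (S s)) (fun s => Om (S s))). lia.
    + intros s Hs. apply (H (S s)). simpl; lia.
    + destruct r as [|g1 r1]; destruct r' as [|g1' r1']; simpl in Hl; try (simpl; congruence).
      destruct (H 1 ltac:(simpl; lia)) as [Q1 [Q2 _]]. simpl in Q1, Q2.
      rewrite !cat_cons. destruct (Ph_hd Q1) as [u ->]. destruct (Ph_hd Q2) as [u' ->].
      rewrite !cat_cons in Et. simpl in Et |- *. congruence.
Qed.

Lemma Ph_mono V p (I Om Om' : V -> Prop) a b g :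
  I a -> (forall u v, I u -> (0 < p u v)%R -> Om v -> I v) -> (forall v, I v -> Om' v) ->
  Ph p a b Om g -> Ph p a b Om' g.
Proof.
  intros Ia Hstep HI [C [H|[mid [-> F]]]]; split; auto.
  right. exists mid; split; auto.
  assert (Forall I mid).
  { clear HI. revert a Ia C. induction mid as [|x mid IH]; intros a Ia C; auto.
    inversion F; subst. simpl in C. destruct C as [C1 C2].
    assert (I x) by eauto. constructor; auto. apply (IH H2 x); auto. }
  eapply Forall_impl; eauto.
Qed.

Lemma last_nth' V (l : list V) z : last l z = nth (pred (length l)) l z.
Proof.
  induction l as [|a l IH]; simpl; auto. destruct l as [|b l]; simpl; auto.
Qed.

Lemma chain_nth V (r : V -> V -> Prop) l z j : chain r l -> S j < length l ->
  r (nth j l z) (nth (S j) l z).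
Proof.
  revert j. induction l as [|a l IH]; intros j C H; simpl in H; [lia|].
  destruct l as [|b l]; simpl in H; [lia|]. destruct C as [C1 C2].
  destruct j; simpl; auto. apply (IH j C2). simpl; lia.
Qed.

Lemma geo_le V adj d (Hd : is_graph_dist adj d) (xs : list V) z i j :
  chain adj xs -> i <= j -> j < length xs -> d (nth i xs z) (nth j xs z) <= j - i.
Proof.
  intros C Hij Hj. induction j as [|j IH].
  - assert (i = 0) by lia; subst. rewrite (d_refl Hd). lia.
  - destruct (Nat.eq_dec i (S j)) as [->|Hne]. rewrite (d_refl Hd); lia.
    pose proof (IH ltac:(lia) ltac:(lia)).
    pose proof (d_tri Hd (nth i xs z) (nth j xs z) (nth (S j) xs z)).
    pose proof (d_adj Hd (chain_nth z C Hj)). lia.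
Qed.

Lemma geo_eq V adj d (Hs : forall u v : V, adj u v -> adj v u) (Hd : is_graph_dist adj d)
  x y xs i j : geodesic adj d x y xs -> i <= j -> j < length xs ->
  d (nth i xs x) (nth j xs x) = j - i.
Proof.
  intros [HL [H0 [Hl C]]] Hij Hj.
  pose proof (@geo_le V adj d Hd xs x i j C Hij Hj).
  pose proof (@geo_le V adj d Hd xs x 0 i C ltac:(lia) ltac:(lia)).
  pose proof (@geo_le V adj d Hd xs x j (pred (length xs)) C ltac:(lia) ltac:(lia)).
  rewrite H0 in H1. rewrite last_nth' in Hl.
  pose proof (d_tri Hd x (nth i xs x) (nth (pred (length xs)) xs x)).
  pose proof (d_tri Hd (nth i xs x) (nth j xs x) (nth (pred (length xs)) xs x)).
  rewrite Hl in *. lia.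
Qed.

Lemma p_pos_d V d (p : V -> V -> R) k (Hk : finite_range d p k) u v : (0 < p u v)%R -> d u v <= k.
Proof.
  intros H. destruct (le_lt_dec (d u v) k); auto. rewrite (Hk u v l) in H. exfalso; apply (Rlt_irrefl 0); auto.
Qed.

Lemma branch V adj d p k (Ht : is_tree adj) (Hd : is_graph_dist adj d) (Hk : finite_range d p k)
  (w e c b : V) g : d c e = d c w + d w e -> ~ ball d k w c ->
  Ph p c b (fun v => ~ ball d k w v) g -> Ph p c b (fun v => ~ ball d k e v) g.
Proof.
  intros H1 H2. apply Ph_mono with (I := fun v => d v e = d v w + d w e /\ ~ ball d k w v).
  - auto.
  - intros u v [Iu Bu] Huv Bv. split; auto.
    destruct (@tree_sep V adj d Ht Hd u e w v Iu) as [E|E]; auto.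
    exfalso. apply (@p_pos_d V d p k Hk) in Huv. unfold ball in *.
    rewrite (d_sym (proj1 Ht) Hd u w) in E. lia.
  - intros v [Iv Bv]. unfold ball in *. rewrite (d_sym (proj1 Ht) Hd v w) in Iv.
    rewrite (d_sym (proj1 Ht) Hd e v). lia.
Qed.

Lemma mono_is (i : nat -> nat) l : (forall s, S s < l -> i s < i (S s)) ->
  forall s t, s <= t -> t < l -> i s <= i t.
Proof.
  intros H s t Hst Ht. induction t as [|t IH]. assert (s = 0) by lia; subst; auto.
  destruct (Nat.eq_dec s (S t)) as [->|]; auto. pose proof (H t Ht). pose proof (IH ltac:(lia) ltac:(lia)). lia.
Qed.

Lemma cross_uniq V d k (xs : list V) c i1 i2 : cross_index d k xs c i1 -> cross_index d k xs c i2 -> i1 = i2.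
Proof.
  intros [j1 [-> [A1 [B1 C1]]]] [j2 [-> [A2 [B2 C2]]]].
  pose proof (C1 j2 A2 B2). pose proof (C2 j1 A1 B1). lia.
Qed.

Lemma prod_ne V p d k x (xs cs : list V) is gs : prod_Ph p d k x xs cs is gs ->
  Forall (fun g => g <> []) gs.
Proof.
  intros [HL H]. apply Forall_forall. intros g Hg. apply (In_nth _ _ []) in Hg.
  destruct Hg as [n [Hn <-]]. apply Ph_nonempty with (p := p) (a := nth n cs x) (b := nth (S n) cs x)
    (Om := fun v => ~ ball d k (nth (nth n is 0%nat) xs x) v). apply H. lia.
Qed.

Lemma SHAPE V p d k x (xs cs : list V) is gs : Xi_path p d k x xs cs is -> prod_Ph p d k x xs cs is gs ->
  exists mid, cat_paths gs = nth 0 cs x :: mid ++ [nth (length is) cs x].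
Proof.
  intros HX HP. pose proof HP as [HL HPh].
  destruct HX as [Hl0 [_ [_ [_ [_ [_ [_ [_ HX]]]]]]]].
  assert (Hne : gs <> []) by (destruct gs; simpl in *; lia || congruence).
  assert (HC : Ph p (nth 0 cs x) (nth (length gs) cs x) (fun _ => True) (cat_paths gs)).
  { apply (@cat_Ph V p (fun _ => True) gs (fun s => nth s cs x) Hne).
    - intros s Hs. eapply Ph_mono with (I := fun _ => True); eauto. apply HPh. lia.
    - intros; auto. }
  rewrite HL in HC. destruct HC as [_ [[E1 E2]|[mid [E _]]]].
  - exfalso. destruct gs as [|g r]; [congruence|]. rewrite cat_cons in E1.
    destruct (HX 0 Hl0) as [_ [Hsph [Hb _]]].
    destruct (HPh 0 ltac:(lia)) as [_ [[_ E3]|[m1 [E3 _]]]]; simpl in E3.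
    + unfold sphere, ball in *. rewrite E3 in Hsph. lia.
    + rewrite E3 in E1. simpl in E1. injection E1 as E1. destruct m1; simpl in E1; discriminate.
  - eauto.
Qed.
Unset Implicit Arguments. Set Strict Implicit.

Theorem corollary3p21 (V : Type) (adj : V -> V -> Prop) (d : V -> V -> nat)
  (p : V -> V -> R) (k : nat)
  (Htree : is_tree adj) (Hval : bounded_valence adj) (Hd : is_graph_dist adj d)
  (Hp : transition_kernel p) (Hirr : irreducible p) (Hk : finite_range d p k)
  (x y : V) (xs : list V) (Hxy : x <> y) (Hgeo : geodesic adj d x y xs)
  (a b : V) (Ha : ball d k x a) (Hay : ~ ball d k y a) (Hb : ball d k y b) :
  (* (i) *)
  (forall (g : list V) (cs : list V) (is : list nat) (gs : list (list V)) (gf : list V),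
     Ph p a b (fun v => ~ ball d k y v) g ->
     decomp p d k x xs g cs is gs gf ->
     nth (length is) cs x = b /\ gf = [b]) /\
  (* (ii) *)
  (forall (cs : list V) (is : list nat),
     Xi_path p d k x xs cs is ->
     bij_onto (@cat_paths V)
       (prod_Ph p d k x xs cs is)
       (fun g => Ph p (nth 0 cs x) (nth (length is) cs x)
                    (fun v => ~ ball d k (nth (pred (length xs)) xs x) v) g /\
                 exists is' gs' gf', decomp p d k x xs g cs is' gs' gf')).
Proof.
  pose proof Hgeo as [HL [H0 [Hlast C]]].
  pose proof (proj1 Htree) as Hs.
  split.
  - intros g cs is gs gf HPh [HX [HP [Hpad [Hhd Hg]]]].
    destruct (SHAPE HX HP) as [mid Hm].
    assert (Hne : gs <> []).
    { destruct HP as [HLg _]. destruct HX as [Hl0 _]. destruct gs; simpl in *; lia || congruence. }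
    rewrite (@cat_snoc V gs gf (prod_ne HP) Hne), Hm in Hg.
    assert (Hcl : ball d k y (nth (length is) cs x)).
    { destruct HX as [_ [_ [_ [_ [_ [_ [_ [Hc _]]]]]]]]. rewrite Hlast in Hc. exact Hc. }
    destruct (ENDGF HPh Hg (fun H => H Hcl) Hhd) as [-> E]. rewrite E. auto.
  - intros cs is HX.
    pose proof HX as [Hl0 [Hlm [Hlc [Hi0 [Hil [Hinc [Hc0 [Hcl HXs]]]]]]]].
    set (m := pred (length xs)) in *.
    assert (Hmlt : m < length xs) by (unfold m; lia).
    assert (Fim : forall s, s < length is -> nth s is 0 <= m).
    { intros s Hs'. pose proof (@mono_is (fun s => nth s is 0) (length is) Hinc s (pred (length is))
        ltac:(lia) ltac:(lia)). simpl in H. lia. }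
    assert (Fjunc : forall s, s < length is -> ~ ball d k (nth m xs x) (nth s cs x)).
    { intros s Hs' Hbm. destruct (HXs s Hs') as [[j [Ei [Hj [_ Hmax]]]] _].
      pose proof (Hmax m Hmlt ltac:(rewrite (nth_indep xs (nth s cs x) x Hmlt); exact Hbm)).
      pose proof (Fim s Hs'). lia. }
    assert (Fbr : forall s g, s < length is ->
      Ph p (nth s cs x) (nth (S s) cs x) (fun v => ~ ball d k (nth (nth s is 0) xs x) v) g ->
      Ph p (nth s cs x) (nth (S s) cs x) (fun v => ~ ball d k (nth m xs x) v) g).
    { intros s g Hs' Hg.
      destruct (Nat.eq_dec (nth s is 0) m) as [Em|Ne]. rewrite Em in Hg; exact Hg.
      pose proof (Fim s Hs') as Hism.
      assert (Hj0 : exists j0, j0 < nth s is 0 /\ ball d k (nth j0 xs x) (nth s cs x)).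
      { destruct s as [|s'].
        - exists 0. split; auto. rewrite H0. exact Hc0.
        - exists (nth s' is 0). split. apply Hinc; lia. apply (HXs s'). lia. }
      destruct Hj0 as [j0 [Hj0 Hbj0]].
      destruct (HXs s Hs') as [_ [Hsph _]].
      assert (Hsep : d (nth s cs x) (nth m xs x) =
                     d (nth s cs x) (nth (nth s is 0) xs x) + d (nth (nth s is 0) xs x) (nth m xs x)).
      { pose proof (@geo_eq V adj d Hs Hd x y xs j0 m Hgeo ltac:(lia) Hmlt) as G1.
        pose proof (@geo_eq V adj d Hs Hd x y xs j0 (nth s is 0) Hgeo ltac:(lia) ltac:(lia)) as G2.
        pose proof (@geo_eq V adj d Hs Hd x y xs (nth s is 0) m Hgeo ltac:(lia) Hmlt) as G3.
        destruct (@tree_sep V adj d Htree Hd (nth j0 xs x) (nth m xs x) (nth (nth s is 0) xs x)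
                   (nth s cs x) ltac:(lia)) as [E|E]; auto.
        exfalso. unfold ball, sphere in *. lia. }
      apply (@branch V adj d p k Htree Hd Hk (nth (nth s is 0) xs x) (nth m xs x) _ _ g Hsep); auto.
      unfold ball, sphere in *. lia. }
    split; [|split].
    + intros gs HP. pose proof HP as [HLg HPs].
      assert (Hne : gs <> []) by (destruct gs; simpl in *; lia || congruence).
      split.
      * rewrite <- HLg.
        apply (@cat_Ph V p (fun v => ~ ball d k (nth m xs x) v) gs (fun s => nth s cs x) Hne).
        -- intros s Hs'. apply Fbr. lia. apply HPs. lia.
        -- intros s Hs'. apply Fjunc. lia.
      * exists is, gs, [nth (length is) cs x]. split; [exact HX|]. split; [exact HP|].
        split; [split; [congruence| simpl; auto]|]. split; [reflexivity|].
        rewrite (@cat_snoc V gs [nth (length is) cs x] (prod_ne HP) Hne). simpl. rewrite app_nil_r. reflexivity.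
    + intros gs gs' HP HP' E.
      pose proof HP as [HLg HPs]. pose proof HP' as [HLg' HPs'].
      apply (@inj_aux V p gs gs' (fun s => nth s cs x)
               (fun s v => ~ ball d k (nth (nth s is 0) xs x) v)); auto.
      { congruence. }
      intros s Hs'. rewrite HLg in Hs'. split; [apply HPs; auto|]. split; [apply HPs'; auto|].
      destruct (HXs s Hs') as [_ [Hsph [Hbb _]]]. split.
      * intros Eq. unfold ball, sphere in *. rewrite Eq in Hsph. lia.
      * intros Hn; apply Hn; exact Hbb.
    + intros g [HPh [is' [gs' [gf' [HX' [HP' [Hpad' [Hhd' Hg']]]]]]]].
      assert (Eis : is' = is).
      { destruct HX' as [_ [_ [Hlc' [_ [_ [_ [_ [_ HXs']]]]]]]].
        apply nth_ext with (d := 0) (d' := 0). rewrite Hlc in Hlc'. simpl in Hlc'. congruence.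
        intros n Hn. destruct (HXs' n Hn) as [Cr' _].
        assert (n < length is) by (rewrite Hlc in Hlc'; simpl in Hlc'; lia).
        destruct (HXs n H) as [Cr _]. exact (cross_uniq Cr' Cr). }
      subst is'. exists gs'. split; auto.
      destruct (SHAPE HX HP') as [mid Hm].
      assert (Hne : gs' <> []).
      { destruct HP' as [HLg _]. destruct gs'; simpl in *; lia || congruence. }
      rewrite (@cat_snoc V gs' gf' (prod_ne HP') Hne), Hm in Hg'.
      assert (Hcl' : ball d k (nth m xs x) (nth (length is) cs x)).
      { rewrite last_nth' in Hcl. exact Hcl. }
      destruct (ENDGF HPh Hg' (fun H => H Hcl') Hhd') as [-> E].
      rewrite Hg', <- Hm. simpl. rewrite app_nil_r. reflexivity.
Qed.
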